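(* Let $n,m,r\in\mathbb{N}$, $\overline{f}\in C[0,1]$, let $\overline{B}_{n,m}$ be the composite Bernstein operator and $(\overline{B}_{n,m})^r$ its $r$-th iterate, and let $S_{\Delta_m}\overline{f}$ be the piecewise linear interpolant of $\overline{f}$ at the nodes $0,\frac1m,\dots,\frac{m-1}{m},1$. Then for every $k\in\{1,\dots,m\}$ and $x\in\left[\frac{k-1}{m},\frac{k}{m}\right]$, $$ \left|(\overline{B}_{n,m})^r(\overline{f};x)-S_{\Delta_m}(\overline{f};x)\right|\le\frac94\,\omega_2\left(\overline{f};\sqrt{\left(x-\frac{k-1}{m}\right)\left(\frac{k}{m}-x\right)\left(1-\frac1n\right)^r}\right), $$ and consequently $$ \left\|(\overline{B}_{n,m})^r(\overline{f})-S_{\Delta_m}(\overline{f})\right\|_\infty\le\frac94\,\omega_2\left(\overline{f};\frac{1}{2m}\sqrt{\left(1-\frac1n\right)^r}\right); $$ in particular $(\overline{B}_{n,m})^r(\overline{f})\to S_{\Delta_m}(\overline{f})$ uniformly on $[0,1]$ as $r\to\infty$ for fixed $n,m$.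
   Context: For $a<b$, $f:[a,b]\to\mathbb{R}$ and $n\in\mathbb{N}$, $B_n^{[a,b]}(f;x)=\frac{1}{(b-a)^n}\sum_{i=0}^n\binom{n}{i}(x-a)^i(b-x)^{n-i}f\left(a+i\frac{b-a}{n}\right)$. For $1\le k\le m$ put $B_{n,k}(f;x):=B_n^{[\frac{k-1}{m},\frac{k}{m}]}(f;x)$ and $\overline{B}_{n,m}(f;x):=B_{n,k}(f;x)$ for $x\in\left[\frac{k-1}{m},\frac{k}{m}\right]$; this maps $C[0,1]$ into $C[0,1]$. $\omega_2(f,\delta)=\sup\{|f(x-h)-2f(x)+f(x+h)|: x\pm h\in[0,1],\ |h|\le\delta\}$. $\|\cdot\|_\infty$ is the sup norm on $[0,1]$. *)

(* Defs.v *)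
From Stdlib Require Import Reals Lra ZArith.
From Coquelicot Require Import Coquelicot.
Open Scope R_scope.

Definition bernstein_ab (a b : R) (n : nat) (f : R -> R) (x : R) : R :=
  / (b - a) ^ n *
  sum_f_R0 (fun i => Binomial.C n i * (x - a) ^ i * (b - x) ^ (n - i)
                     * f (a + INR i * (b - a) / INR n)) n.

Definition bernstein_k (n m k : nat) (f : R -> R) (x : R) : R :=
  bernstein_ab (INR (k - 1) / INR m) (INR k / INR m) n f x.

(* At interior
   nodes x = j/m both adjacent choices give the same value f(j/m), so the
   choice is immaterial. *)
Definition piece_index (m : nat) (x : R) : nat :=
  Nat.min m (Nat.max 1 (Z.to_nat (up (INR m * x)))).

Definition comp_bernstein (n m : nat) (f : R -> R) (x : R) : R :=
  bernstein_k n m (piece_index m x) f x.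

Definition comp_bernstein_iter (n m r : nat) (f : R -> R) : R -> R :=
  Nat.iter r (comp_bernstein n m) f.

Definition lin_interp (m : nat) (f : R -> R) (x : R) : R :=
  let k := piece_index m x in
  f (INR (k - 1) / INR m)
  + (INR m * x - INR (k - 1)) * (f (INR k / INR m) - f (INR (k - 1) / INR m)).

Definition omega2 (f : R -> R) (delta : R) : R :=
  real (Lub_Rbar (fun v => exists x h,
     0 <= x - h <= 1 /\ 0 <= x + h <= 1 /\ Rabs h <= delta /\
     v = Rabs (f (x - h) - 2 * f x + f (x + h)))).

Definition supnorm01 (g : R -> R) : R :=
  real (Lub_Rbar (fun v => exists x, 0 <= x <= 1 /\ v = Rabs (g x))).

Definition cont01 (f : R -> R) : Prop :=
  forall x, 0 <= x <= 1 ->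
    filterlim f (within (fun y => 0 <= y <= 1) (locally x)) (locally (f x)).

(* Main.v *)
Require Import Defs.
From Stdlib Require Import Reals Lra Lia ZArith.
From Coquelicot Require Import Coquelicot.
Open Scope R_scope.


Definition bb (n : nat) (p q : R) (i : nat) : R := Binomial.C n i * p ^ i * q ^ (n - i).

Lemma iC (n i : nat) : (i <= n)%nat ->
  INR (S i) * Binomial.C (S n) (S i) = INR (S n) * Binomial.C n i.
Proof.
  intros Hi. unfold Binomial.C.
  replace (S n - S i)%nat with (n - i)%nat by lia.
  rewrite !fact_simpl, !mult_INR.
  pose proof (INR_fact_neq_0 i). pose proof (INR_fact_neq_0 (n - i)).
  pose proof (INR_fact_neq_0 n).
  assert (INR (S i) <> 0) by (apply not_0_INR; lia).
  field. auto.
Qed.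

Lemma shift_sum (n : nat) (h : nat -> R) :
  sum_f_R0 (fun i => INR i * Binomial.C (S n) i * h i) (S n)
  = INR (S n) * sum_f_R0 (fun j => Binomial.C n j * h (S j)) n.
Proof.
  rewrite decomp_sum by lia. simpl pred.
  replace (INR 0 * Binomial.C (S n) 0 * h 0%nat) with 0 by (simpl; ring).
  rewrite Rplus_0_l, scal_sum. apply sum_eq. intros i Hi.
  rewrite (iC n i Hi). ring.
Qed.

Lemma mom0 n p q : sum_f_R0 (bb n p q) n = (p + q) ^ n.
Proof. rewrite binomial. reflexivity. Qed.

Lemma mom1 n p q : sum_f_R0 (fun i => INR i * bb n p q i) n = INR n * p * (p + q) ^ (n - 1).
Proof.
  destruct n as [|n].
  - simpl. unfold bb. simpl. ring.
  - transitivity (sum_f_R0 (fun i => INR i * Binomial.C (S n) i * (p ^ i * q ^ (S n - i))) (S n)).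
    { apply sum_eq; intros; unfold bb; ring. }
    rewrite shift_sum. replace (S n - 1)%nat with n by lia.
    rewrite <- mom0.
    assert (E : sum_f_R0 (fun j => Binomial.C n j * (p ^ S j * q ^ (S n - S j))) n
              = p * sum_f_R0 (bb n p q) n).
    { rewrite scal_sum. apply sum_eq; intros i Hi. unfold bb. simpl. ring. }
    rewrite E. ring.
Qed.

Lemma mom1' n p q : sum_f_R0 (fun i => INR (n - i) * bb n p q i) n = INR n * q * (p + q) ^ (n - 1).
Proof.
  transitivity (sum_f_R0 (fun i => bb n p q i * INR n + (INR i * bb n p q i) * (-1)) n).
  { apply sum_eq; intros i Hi. rewrite minus_INR by lia. ring. }
  rewrite plus_sum, <- (scal_sum (bb n p q)).
  rewrite <- (scal_sum (fun i => INR i * bb n p q i)).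
  rewrite mom0, mom1.
  destruct n as [|n]. { simpl. ring. }
  replace (S n - 1)%nat with n by lia. simpl. ring.
Qed.

Lemma mom2 n p q : sum_f_R0 (fun i => INR i * INR (n - i) * bb n p q i) n
  = INR n * INR (n - 1) * p * q * (p + q) ^ (n - 2).
Proof.
  destruct n as [|n].
  - simpl. unfold bb. simpl. ring.
  - transitivity (sum_f_R0 (fun i => INR i * Binomial.C (S n) i * (INR (S n - i) * p ^ i * q ^ (S n - i))) (S n)).
    { apply sum_eq; intros; unfold bb; ring. }
    rewrite shift_sum.
    transitivity (INR (S n) * (p * sum_f_R0 (fun i => INR (n - i) * bb n p q i) n)).
    { f_equal. rewrite scal_sum. apply sum_eq; intros i Hi. unfold bb. simpl. ring. }
    rewrite mom1'. replace (S n - 1)%nat with n by lia.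
    replace (S n - 2)%nat with (n - 1)%nat by lia. ring.
Qed.


Lemma sum_zero (F : nat -> R) N : (forall i, (i <= N)%nat -> F i = 0) -> sum_f_R0 F N = 0.
Proof.
  intros H. induction N as [|N IH]; simpl.
  - apply H; lia.
  - rewrite IH by (intros; apply H; lia). rewrite H by lia. ring.
Qed.

Lemma sum_scal_l (F : nat -> R) N k : sum_f_R0 (fun i => k * F i) N = k * sum_f_R0 F N.
Proof. rewrite scal_sum. apply sum_eq; intros; ring. Qed.

Lemma C_pos n i : 0 <= Binomial.C n i.
Proof.
  unfold Binomial.C. pose proof (INR_fact_lt_0 n). pose proof (INR_fact_lt_0 i).
  pose proof (INR_fact_lt_0 (n - i)). apply Rlt_le. apply Rdiv_lt_0_compat; auto.
  apply Rmult_lt_0_compat; auto.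
Qed.

Section Bern.
Variables (a b : R) (n : nat).
Hypothesis Hab : a < b.
Hypothesis Hn : (1 <= n)%nat.

Definition nd (i : nat) : R := a + INR i * (b - a) / INR n.

Lemma B_eq g x : bernstein_ab a b n g x = / (b - a) ^ n * sum_f_R0 (fun i => bb n (x - a) (b - x) i * g (nd i)) n.
Proof. reflexivity. Qed.

Lemma INRn_pos : 0 < INR n.
Proof. apply lt_0_INR; lia. Qed.

Lemma nd_in i : (i <= n)%nat -> a <= nd i <= b.
Proof.
  intros Hi. unfold nd. pose proof INRn_pos.
  assert (0 <= INR i <= INR n) by (split; [apply pos_INR | apply le_INR; auto]).
  assert (0 <= INR i * (b - a) / INR n <= b - a).
  { split. - apply Rmult_le_pos; [apply Rmult_le_pos; lra | left; apply Rinv_0_lt_compat; lra].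
    - unfold Rdiv. apply (Rmult_le_reg_r (INR n)); auto. rewrite Rmult_assoc, Rinv_l by lra. nra. }
  lra.
Qed.

Lemma B_ext g1 g2 x : (forall t, a <= t <= b -> g1 t = g2 t) ->
  bernstein_ab a b n g1 x = bernstein_ab a b n g2 x.
Proof.
  intros H. rewrite !B_eq. f_equal. apply sum_eq. intros i Hi. rewrite H; auto. apply nd_in; auto.
Qed.

Lemma B_lin al be g1 g2 x :
  bernstein_ab a b n (fun t => al * g1 t + be * g2 t) x
  = al * bernstein_ab a b n g1 x + be * bernstein_ab a b n g2 x.
Proof.
  rewrite !B_eq.
  transitivity (/ (b - a) ^ n * sum_f_R0 (fun i => al * (bb n (x - a) (b - x) i * g1 (nd i))
                    + be * (bb n (x - a) (b - x) i * g2 (nd i))) n).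
  { f_equal. apply sum_eq; intros; ring. }
  rewrite plus_sum, !sum_scal_l. ring.
Qed.

Lemma bb_pos x i : a <= x <= b -> 0 <= bb n (x - a) (b - x) i.
Proof.
  intros Hx. unfold bb. apply Rmult_le_pos; [apply Rmult_le_pos|]; try apply C_pos; apply pow_le; lra.
Qed.

Lemma B_pos g1 g2 x : a <= x <= b -> (forall t, a <= t <= b -> g1 t <= g2 t) ->
  bernstein_ab a b n g1 x <= bernstein_ab a b n g2 x.
Proof.
  intros Hx H. rewrite !B_eq. apply Rmult_le_compat_l.
  - left. apply Rinv_0_lt_compat, pow_lt. lra.
  - apply sum_Rle. intros i Hi. apply Rmult_le_compat_l. apply bb_pos; auto. apply H, nd_in; auto.
Qed.

Lemma B_one x : bernstein_ab a b n (fun _ => 1) x = 1.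
Proof.
  rewrite B_eq. transitivity (/ (b - a) ^ n * sum_f_R0 (bb n (x - a) (b - x)) n).
  { f_equal. apply sum_eq; intros; ring. }
  rewrite mom0. replace (x - a + (b - x)) with (b - a) by ring.
  field. apply pow_nonzero. lra.
Qed.

Lemma B_id x : bernstein_ab a b n (fun t => t) x = x.
Proof.
  rewrite B_eq. unfold nd. pose proof INRn_pos.
  transitivity (/ (b - a) ^ n * (a * sum_f_R0 (bb n (x - a) (b - x)) n
       + (b - a) / INR n * sum_f_R0 (fun i => INR i * bb n (x - a) (b - x) i) n)).
  { f_equal. rewrite <- !sum_scal_l, <- plus_sum. apply sum_eq; intros; field. lra. }
  rewrite mom0, mom1. replace (x - a + (b - x)) with (b - a) by ring.
  destruct n as [|n']; [lia|]. replace (S n' - 1)%nat with n' by lia.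
  change ((b - a) ^ S n') with ((b - a) * (b - a) ^ n').
  field. split; [lra|split; [apply pow_nonzero|]; lra].
Qed.

Lemma B_d2 x : bernstein_ab a b n (fun t => (t - a) * (b - t)) x = (1 - 1 / INR n) * ((x - a) * (b - x)).
Proof.
  rewrite B_eq. unfold nd. pose proof INRn_pos.
  transitivity (/ (b - a) ^ n * ((b - a) ^ 2 / INR n ^ 2 *
      sum_f_R0 (fun i => INR i * INR (n - i) * bb n (x - a) (b - x) i) n)).
  { f_equal. rewrite <- !sum_scal_l. apply sum_eq; intros i Hi. rewrite minus_INR by lia. field. lra. }
  rewrite mom2. replace (x - a + (b - x)) with (b - a) by ring.
  destruct (Nat.eq_dec n 1) as [E|E].
  - subst n. simpl. field. lra.
  - replace n with (2 + (n - 2))%nat at 1 by lia. rewrite pow_add.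
    rewrite minus_INR by lia. simpl INR.
    field. split; [lra|]. split; [apply pow_nonzero; lra|lra].
Qed.

Lemma B_left g : bernstein_ab a b n g a = g a.
Proof.
  rewrite B_eq. rewrite decomp_sum by lia.
  rewrite sum_zero. 2: { intros i Hi. unfold bb. simpl. ring. }
  unfold bb, nd. simpl. rewrite Nat.sub_0_r. unfold Binomial.C. rewrite Nat.sub_0_r.
  simpl. replace (a + 0 * (b - a) / INR n) with a by (field; pose proof INRn_pos; lra).
  field; repeat split; try apply pow_nonzero; try apply INR_fact_neq_0; lra.
Qed.

Lemma B_right g : bernstein_ab a b n g b = g b.
Proof.
  rewrite B_eq. pose proof INRn_pos as Hp. rewrite sum_N_predN by lia.
  rewrite sum_zero. 2: { intros i Hi. unfold bb. replace (n - i)%nat with (S (n - i - 1)) by lia. simpl. ring. }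
  unfold bb, nd. rewrite Nat.sub_diag. unfold Binomial.C. rewrite Nat.sub_diag.
  replace (a + INR n * (b - a) / INR n) with b by (field; lra).
  rewrite pow_O. change (Factorial.fact 0) with 1%nat. rewrite Rmult_1_r. simpl INR. field; repeat split; try apply pow_nonzero; try apply INR_fact_neq_0; lra.
Qed.

End Bern.


Lemma Rabs_inv x y : Rabs x <= y -> - y <= x <= y.
Proof. unfold Rabs. destruct (Rcase_abs x); lra. Qed.

Section Iter.
Variables (a b : R) (n : nat).
Hypothesis Hab : a < b.
Hypothesis Hn : (1 <= n)%nat.

Definition T (r : nat) (g : R -> R) : R -> R := Nat.iter r (bernstein_ab a b n) g.

Lemma T_S r g x : T (S r) g x = bernstein_ab a b n (T r g) x.
Proof. reflexivity. Qed.

Lemma T_ext r g1 g2 : (forall t, a <= t <= b -> g1 t = g2 t) ->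
  forall x, a <= x <= b -> T r g1 x = T r g2 x.
Proof.
  intros H. induction r as [|r IH]; intros x Hx.
  - simpl. auto.
  - rewrite !T_S. apply B_ext; auto.
Qed.

Lemma T_lin r al be g1 g2 : forall x, a <= x <= b ->
  T r (fun t => al * g1 t + be * g2 t) x = al * T r g1 x + be * T r g2 x.
Proof.
  induction r as [|r IH]; intros x Hx.
  - reflexivity.
  - rewrite !T_S. rewrite (B_ext a b n Hab Hn _ (fun t => al * T r g1 t + be * T r g2 t)); auto.
    apply B_lin.
Qed.

Lemma T_pos r g1 g2 : (forall t, a <= t <= b -> g1 t <= g2 t) ->
  forall x, a <= x <= b -> T r g1 x <= T r g2 x.
Proof.
  intros H. induction r as [|r IH]; intros x Hx.
  - simpl. auto.
  - rewrite !T_S. apply B_pos; auto.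
Qed.

Definition d2 (t : R) : R := (t - a) * (b - t).

Lemma T_comb r c0 c1 c2 : forall x, a <= x <= b ->
  T r (fun t => c0 + c1 * t + c2 * d2 t) x = c0 + c1 * x + c2 * ((1 - 1 / INR n) ^ r * d2 x).
Proof.
  induction r as [|r IH]; intros x Hx.
  - simpl. ring.
  - rewrite T_S.
    rewrite (B_ext a b n Hab Hn _ (fun t => 1 * (c0 + c1 * t) + (c2 * (1 - 1 / INR n) ^ r) * d2 t)).
    2: { intros t Ht. rewrite IH by auto. ring. }
    rewrite (B_lin a b n 1 _ (fun t => c0 + c1 * t) d2). unfold d2 at 2. rewrite B_d2 by auto.
    rewrite (B_ext a b n Hab Hn _ (fun t => c0 * 1 + c1 * t)) by (intros; ring).
    rewrite (B_lin a b n c0 c1 (fun _ => 1) (fun t => t)).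
    rewrite B_one, B_id by auto. unfold d2. simpl. ring.
Qed.

Lemma T_err r g al be h W x : a <= x <= b -> 0 < h ->
  (forall t, a <= t <= b -> Rabs (g t - (al + be * t)) <= W + W / h ^ 2 * d2 t) ->
  Rabs (T r g x - (al + be * x)) <= W + W / h ^ 2 * ((1 - 1 / INR n) ^ r * d2 x).
Proof.
  intros Hx Hh H.
  assert (E1 : T r g x - (al + be * x) = T r (fun t => 1 * g t + (-1) * (al + be * t + 0 * d2 t)) x).
  { rewrite T_lin by auto. rewrite T_comb by auto. ring. }
  assert (E2 : W + W / h ^ 2 * ((1 - 1 / INR n) ^ r * d2 x) = T r (fun t => W + 0 * t + W / h ^ 2 * d2 t) x).
  { rewrite T_comb by auto. ring. }
  assert (E3 : -(T r g x - (al + be * x)) = T r (fun t => (-1) * g t + 1 * (al + be * t + 0 * d2 t)) x).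
  { rewrite T_lin by auto. rewrite T_comb by auto. ring. }
  apply Rabs_le. split.
  - enough (-(T r g x - (al + be * x)) <= W + W / h ^ 2 * ((1 - 1 / INR n) ^ r * d2 x)) by lra.
    rewrite E3, E2. apply T_pos; auto. intros t Ht. specialize (H t Ht).
    apply Rabs_inv in H. lra.
  - rewrite E1, E2. apply T_pos; auto. intros t Ht. specialize (H t Ht).
    apply Rabs_inv in H. lra.
Qed.

End Iter.


Lemma maxp (a b h W : R) (E : R -> R) : a < b -> 0 < h -> 2 * h <= b - a -> 0 < W ->
  (forall c, a <= c <= b -> continuity_pt E c) -> E a = 0 -> E b = 0 ->
  (forall u s, 0 <= s <= h -> a <= u - s -> u + s <= b -> - W <= E (u - s) - 2 * E u + E (u + s)) ->
  forall t, a <= t <= b -> E t <= W + W / h ^ 2 * ((t - a) * (b - t)).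
Proof.
  intros Hab Hh H2h HW Hc Ea Eb Hd.
  set (k := W / h ^ 2).
  assert (Hk : 0 < k) by (unfold k; apply Rdiv_lt_0_compat; [lra| apply pow_lt; lra]).
  assert (Hkh : k * h ^ 2 = W) by (unfold k; field; lra).
  set (G := fun t => E t - (W + k * ((t - a) * (b - t)))).
  assert (HG : forall c, a <= c <= b -> continuity_pt G c).
  { intros c Hc'. unfold G. apply continuity_pt_minus; auto. reg. }
  destruct (continuity_ab_maj G a b (Rlt_le _ _ Hab) HG) as [M [HM HMab]].
  assert (GM : G M <= 0).
  { destruct (Rle_or_lt (M - a) h) as [C1|C1].
    - set (s := M - a).
      assert (Hs : 0 <= s <= h) by (unfold s; lra).
      pose proof (Hd M s Hs) as D. replace (M - s) with a in D by (unfold s; ring).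
      specialize (D (Rle_refl a)). assert (M + s <= b) by (unfold s; lra).
      specialize (D H). rewrite Ea in D.
      pose proof (HM (M + s) ltac:(unfold s; lra)) as D2. unfold G in D2 |- *.
      assert (Id : (W + k * ((M + s - a) * (b - (M + s)))) - 2 * (W + k * ((M - a) * (b - M))) + W
                   = - 2 * k * s ^ 2) by (unfold s; ring).
      assert (0 <= k * s ^ 2) by (apply Rmult_le_pos; [lra | apply pow2_ge_0]).
      lra.
    - destruct (Rle_or_lt (b - M) h) as [C2|C2].
      + set (s := b - M).
        assert (Hs : 0 <= s <= h) by (unfold s; lra).
        pose proof (Hd M s Hs) as D. replace (M + s) with b in D by (unfold s; ring).
        assert (a <= M - s) by (unfold s; lra).
        specialize (D H (Rle_refl b)). rewrite Eb in D.
        pose proof (HM (M - s) ltac:(unfold s; lra)) as D2. unfold G in D2 |- *.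
        assert (Id : (W + k * ((M - s - a) * (b - (M - s)))) - 2 * (W + k * ((M - a) * (b - M))) + W
                     = - 2 * k * s ^ 2) by (unfold s; ring).
        assert (0 <= k * s ^ 2) by (apply Rmult_le_pos; [lra | apply pow2_ge_0]).
        lra.
      + exfalso.
        pose proof (Hd M h (conj (Rlt_le _ _ Hh) (Rle_refl h)) ltac:(lra) ltac:(lra)) as D.
        pose proof (HM (M - h) ltac:(lra)) as D1.
        pose proof (HM (M + h) ltac:(lra)) as D2. unfold G in D1, D2.
        assert (Id : (W + k * ((M - h - a) * (b - (M - h)))) + (W + k * ((M + h - a) * (b - (M + h))))
                      - 2 * (W + k * ((M - a) * (b - M))) = - 2 * (k * h ^ 2)) by ring.
        rewrite Hkh in Id. lra. }
  intros t Ht. pose proof (HM t Ht). unfold G in *. fold k. lra.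
Qed.


Lemma lub_le (E : R -> Prop) c : (exists v, E v) -> (forall v, E v -> v <= c) -> real (Lub_Rbar E) <= c.
Proof.
  intros [v Hv] H. destruct (Lub_Rbar_correct E) as [Hub Hl].
  assert (Hc : Rbar_le (Lub_Rbar E) (Finite c)) by (apply Hl; intros x Hx; simpl; auto).
  pose proof (Hub v Hv) as Hv'.
  destruct (Lub_Rbar E) as [l| |]; simpl in *; auto; contradiction.
Qed.

Lemma lub_ge (E : R -> Prop) M v : (forall w, E w -> w <= M) -> E v -> v <= real (Lub_Rbar E).
Proof.
  intros H Hv. destruct (Lub_Rbar_correct E) as [Hub Hl].
  assert (Hc : Rbar_le (Lub_Rbar E) (Finite M)) by (apply Hl; intros x Hx; simpl; auto).
  pose proof (Hub v Hv) as Hv'.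
  destruct (Lub_Rbar E) as [l| |]; simpl in *; auto; contradiction.
Qed.

Lemma clamp_lip x y : Rabs (Rmax 0 (Rmin 1 y) - Rmax 0 (Rmin 1 x)) <= Rabs (y - x).
Proof.
  unfold Rmax, Rmin; repeat destruct Rle_dec; unfold Rabs; repeat destruct Rcase_abs; lra.
Qed.


Section F.
Variable f : R -> R.
Hypothesis Hf : cont01 f.

Definition fe (x : R) : R := f (Rmax 0 (Rmin 1 x)).

Lemma fe_eq x : 0 <= x <= 1 -> fe x = f x.
Proof.
  intros Hx. unfold fe. f_equal. unfold Rmax, Rmin; repeat destruct Rle_dec; lra.
Qed.

Lemma cont_ed x : 0 <= x <= 1 -> forall eps, 0 < eps -> exists d, 0 < d /\
  forall y, 0 <= y <= 1 -> Rabs (y - x) < d -> Rabs (f y - f x) < eps.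
Proof.
  intros Hx eps He. pose proof (Hf x Hx) as H.
  rewrite filterlim_locally in H. specialize (H (mkposreal eps He)).
  destruct H as [d Hd]. exists d. split. apply cond_pos.
  intros y Hy Hyx. apply (Hd y); auto.
Qed.

Lemma fe_cont x : continuity_pt fe x.
Proof.
  unfold continuity_pt, continue_in, limit1_in, limit_in. intros eps He.
  set (c := Rmax 0 (Rmin 1 x)).
  assert (Hc : 0 <= c <= 1) by (unfold c, Rmax, Rmin; repeat destruct Rle_dec; lra).
  destruct (cont_ed c Hc eps He) as [d [Hd H]]. exists d. split; auto.
  intros y [_ Hy]. simpl in *. unfold R_dist in *. unfold fe. apply H.
  unfold Rmax, Rmin; repeat destruct Rle_dec; lra.
  pose proof (clamp_lip x y) as HL. fold c in HL. lra.
Qed.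

Lemma f_bounded : exists M, forall x, 0 <= x <= 1 -> Rabs (f x) <= M.
Proof.
  destruct (continuity_ab_maj (fun x => Rabs (fe x)) 0 1 ltac:(lra)) as [Mx [HM _]].
  { intros c _. apply (continuity_pt_comp fe Rabs). apply fe_cont. apply Rcontinuity_abs. }
  exists (Rabs (fe Mx)). intros x Hx. rewrite <- fe_eq by auto. apply HM; auto.
Qed.

Lemma f_unif : forall eps, 0 < eps -> exists d, 0 < d /\ forall x y, 0 <= x <= 1 -> 0 <= y <= 1 ->
  Rabs (x - y) < d -> Rabs (f x - f y) < eps.
Proof.
  intros eps He. pose proof (Heine fe (fun c => 0 <= c <= 1) (compact_P3 0 1) (fun x _ => fe_cont x)) as U.
  destruct (U (mkposreal eps He)) as [d Hd]. exists d. split. apply cond_pos.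
  intros x y Hx Hy Hxy. rewrite <- (fe_eq x), <- (fe_eq y) by auto. apply Hd; auto.
Qed.

Definition P2 (h : R) : R -> Prop := fun v => exists x h',
     0 <= x - h' <= 1 /\ 0 <= x + h' <= 1 /\ Rabs h' <= h /\
     v = Rabs (f (x - h') - 2 * f x + f (x + h')).

Lemma om_def h : omega2 f h = real (Lub_Rbar (P2 h)).
Proof. reflexivity. Qed.

Lemma P2_bounded : exists M, forall h v, P2 h v -> v <= M.
Proof.
  destruct f_bounded as [M HM]. exists (4 * M). intros h v [x [h' [H1 [H2 [H3 ->]]]]].
  assert (0 <= x <= 1) by lra.
  pose proof (Rabs_inv _ _ (HM _ H1)). pose proof (Rabs_inv _ _ (HM _ H2)).
  pose proof (Rabs_inv _ _ (HM x H)). apply Rabs_le. lra.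
Qed.

Lemma P2_ne h : 0 <= h -> P2 h 0.
Proof.
  intros Hh. exists 0, 0. repeat split; try lra. rewrite Rabs_R0; lra.
  replace (f (0 - 0) - 2 * f 0 + f (0 + 0)) with 0 by (rewrite Rminus_0_r, Rplus_0_r; ring).
  rewrite Rabs_R0. reflexivity.
Qed.

Lemma om_ge h v : P2 h v -> v <= omega2 f h.
Proof.
  intros Hv. destruct P2_bounded as [M HM]. rewrite om_def. apply (lub_ge _ M); [intros w Hw; exact (HM h w Hw) | exact Hv].
Qed.

Lemma om_le h c : 0 <= h -> (forall v, P2 h v -> v <= c) -> omega2 f h <= c.
Proof.
  intros Hh H. rewrite om_def. apply lub_le; auto. exists 0. apply P2_ne; auto.
Qed.

Lemma om_nonneg h : 0 <= h -> 0 <= omega2 f h.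
Proof. intros Hh. apply om_ge, P2_ne; auto. Qed.

Lemma om_mono h1 h2 : 0 <= h1 -> h1 <= h2 -> omega2 f h1 <= omega2 f h2.
Proof.
  intros H1 H2. apply om_le; auto. intros v [x [h' [A [B [C D]]]]]. apply om_ge.
  exists x, h'. repeat split; lra.
Qed.

Lemma om_small eps : 0 < eps -> exists d, 0 < d /\ forall h, 0 <= h <= d -> omega2 f h <= eps.
Proof.
  intros He. destruct (f_unif (eps / 4) ltac:(lra)) as [d [Hd H]].
  exists (d / 2). split. lra. intros h Hh. apply om_le. lra.
  intros v [x [h' [A [B [C ->]]]]].
  assert (Hx : 0 <= x <= 1) by lra.
  assert (Rabs (h') < d) by lra.
  pose proof (H (x - h') x ltac:(lra) Hx ltac:(replace (x - h' - x) with (- h') by ring; rewrite Rabs_Ropp; lra)).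
  pose proof (H (x + h') x ltac:(lra) Hx ltac:(replace (x + h' - x) with h' by ring; lra)).
  replace (f (x - h') - 2 * f x + f (x + h')) with ((f (x - h') - f x) + (f (x + h') - f x)) by ring.
  pose proof (Rabs_triang (f (x - h') - f x) (f (x + h') - f x)). lra.
Qed.

Lemma om_sd u s h : 0 <= s <= h -> 0 <= u - s -> u + s <= 1 ->
  Rabs (f (u - s) - 2 * f u + f (u + s)) <= omega2 f h.
Proof.
  intros Hs H1 H2. apply om_ge. exists u, s. repeat split; try lra. rewrite Rabs_right; lra.
Qed.

End F.


Lemma INR_pred k : (1 <= k)%nat -> INR (k - 1) = INR k - 1.
Proof. intros H. rewrite minus_INR by lia. simpl. ring. Qed.

Lemma up_nat (y : R) (k : nat) : INR k - 1 <= y -> y < INR k -> up y = Z.of_nat k.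
Proof.
  intros H1 H2. symmetry. apply tech_up; rewrite <- INR_IZR_INZ; lra.
Qed.

Section Piece.
Variables (m k : nat).
Hypothesis Hm : (1 <= m)%nat.
Hypothesis Hk : (1 <= k <= m)%nat.

Lemma INRm_pos : 0 < INR m.
Proof. apply lt_0_INR; lia. Qed.

Lemma ab_lt : INR (k - 1) / INR m < INR k / INR m.
Proof.
  pose proof INRm_pos. rewrite INR_pred by lia. unfold Rdiv. apply Rmult_lt_compat_r.
  apply Rinv_0_lt_compat; lra. lra.
Qed.

Lemma a_ge0 : 0 <= INR (k - 1) / INR m.
Proof. pose proof INRm_pos. apply Rdiv_le_0_compat. apply pos_INR. lra. Qed.

Lemma b_le1 : INR k / INR m <= 1.
Proof.
  pose proof INRm_pos. assert (INR k <= INR m) by (apply le_INR; lia).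
  apply (Rmult_le_reg_r (INR m)); auto. unfold Rdiv. rewrite Rmult_assoc, Rinv_l; lra.
Qed.

Lemma ba_len : INR k / INR m - INR (k - 1) / INR m = 1 / INR m.
Proof. pose proof INRm_pos. rewrite INR_pred by lia. field. lra. Qed.

Lemma piece_cases x : INR (k - 1) / INR m <= x <= INR k / INR m ->
  piece_index m x = k \/ (x = INR k / INR m /\ (k < m)%nat /\ piece_index m x = S k).
Proof.
  intros Hx. pose proof INRm_pos.
  assert (Hy : INR k - 1 <= INR m * x <= INR k).
  { rewrite <- INR_pred by lia.
    split; [ apply (Rmult_le_reg_r (/ INR m)) | apply (Rmult_le_reg_r (/ INR m)) ];
      try (apply Rinv_0_lt_compat; lra);
      replace (INR m * x * / INR m) with x by (field; lra); unfold Rdiv in Hx; lra. }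
  unfold piece_index.
  destruct (Rlt_or_le (INR m * x) (INR k)) as [C|C].
  - left. rewrite (up_nat _ k) by lra. rewrite Nat2Z.id. lia.
  - assert (E : INR m * x = INR k) by lra.
    rewrite (up_nat _ (S k)) by (rewrite S_INR; lra). rewrite Nat2Z.id.
    destruct (Nat.eq_dec k m) as [->|Hne].
    + left. lia.
    + right. split. apply (Rmult_eq_reg_l (INR m)); [|lra]. rewrite E. field. lra.
      split. lia. lia.
Qed.

End Piece.

Lemma piece_range m x : (1 <= m)%nat -> 0 <= x <= 1 ->
  (1 <= piece_index m x <= m)%nat /\
  INR (piece_index m x - 1) / INR m <= x <= INR (piece_index m x) / INR m.
Proof.
  intros Hm Hx. assert (Hmp : 0 < INR m) by (apply lt_0_INR; lia).
  unfold piece_index. set (z := up (INR m * x)).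
  destruct (archimed (INR m * x)) as [A1 A2]. fold z in A1, A2.
  assert (Hmx : 0 <= INR m * x) by nra.
  assert (Hz : (0 < z)%Z) by (apply lt_IZR; simpl; lra).
  set (j := Z.to_nat z).
  assert (Hj : INR j = IZR z) by (unfold j; rewrite INR_IZR_INZ, Z2Nat.id; [reflexivity|lia]).
  assert (Hj1 : (1 <= j)%nat) by (unfold j; lia).
  replace (Nat.max 1 j) with j by lia.
  assert (Key : forall i : nat, (1 <= i)%nat -> INR i - 1 <= INR m * x -> INR m * x <= INR i ->
             INR (i - 1) / INR m <= x <= INR i / INR m).
  { intros i Hi H1 H2. destruct i as [|i]. { lia. }
    rewrite INR_pred by lia. split; unfold Rdiv;
    [apply (Rmult_le_reg_l (INR m)) | apply (Rmult_le_reg_l (INR m))]; auto;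
    replace (INR m * ((INR (S i) - 1) * / INR m)) with (INR (S i) - 1) by (field; lra);
    try replace (INR m * (INR (S i) * / INR m)) with (INR (S i)) by (field; lra); lra. }
  destruct (le_lt_dec j m) as [C|C].
  - replace (Nat.min m j) with j by lia. split. lia. apply Key; auto; lra.
  - replace (Nat.min m j) with m by lia. split. lia.
    assert (INR (S m) <= INR j) by (apply le_INR; lia). rewrite S_INR in H.
    apply Key. lia. lra. nra.
Qed.


Section Main.
Variables (n m : nat) (f : R -> R).
Hypothesis Hn : (1 <= n)%nat.
Hypothesis Hm : (1 <= m)%nat.
Hypothesis Hf : cont01 f.

Section K.
Variable k : nat.
Hypothesis Hk : (1 <= k <= m)%nat.
Let a := INR (k - 1) / INR m.
Let b := INR k / INR m.
Let Hab : a < b := ab_lt m k Hm Hk.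

Lemma iter_piece r : forall x, a <= x <= b -> comp_bernstein_iter n m r f x = T a b n r f x.
Proof.
  induction r as [|r IH]; intros x Hx.
  - reflexivity.
  - change (comp_bernstein_iter n m (S r) f x) with
      (bernstein_k n m (piece_index m x) (comp_bernstein_iter n m r f) x).
    rewrite T_S.
    destruct (piece_cases m k Hm Hk x Hx) as [E|[Ex [Hkm E]]]; rewrite E; unfold bernstein_k.
    + apply (B_ext a b n Hab Hn). intros t Ht; apply IH; auto.
    + replace (S k - 1)%nat with k by lia. rewrite Ex. fold b.
      assert (Hb' : b < INR (S k) / INR m).
      { pose proof (ab_lt m (S k) Hm ltac:(lia)) as HH. replace (S k - 1)%nat with k in HH by lia. exact HH. }
      rewrite (B_left b _ n Hb' Hn).
      rewrite (IH b) by lra. rewrite (B_right a b n Hab Hn). reflexivity.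
Qed.

Let al := f a - INR (k - 1) * (f b - f a).
Let be := INR m * (f b - f a).

Lemma lin_piece x : a <= x <= b -> lin_interp m f x = al + be * x.
Proof.
  intros Hx. pose proof (INRm_pos m k Hm Hk). unfold lin_interp, al, be.
  destruct (piece_cases m k Hm Hk x Hx) as [E|[Ex [Hkm E]]]; rewrite E.
  - fold a b. ring.
  - replace (S k - 1)%nat with k by lia. fold b. rewrite Ex. unfold b, a.
    rewrite INR_pred by lia. field. lra.
Qed.

Lemma La : al + be * a = f a.
Proof. pose proof (INRm_pos m k Hm Hk). unfold al, be, a. field. lra. Qed.

Lemma Lb : al + be * b = f b.
Proof. pose proof (INRm_pos m k Hm Hk). unfold al, be, a, b. rewrite INR_pred by lia. field. lra. Qed.

Lemma err_bound h W : 0 < h -> 2 * h <= b - a -> omega2 f h < W ->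
  forall t, a <= t <= b -> Rabs (f t - (al + be * t)) <= W + W / h ^ 2 * d2 a b t.
Proof.
  intros Hh H2h HW.
  assert (W0 : 0 < W) by (pose proof (om_nonneg f Hf h ltac:(lra)); lra).
  assert (A0 : 0 <= a) by exact (a_ge0 m k Hm Hk). assert (B1 : b <= 1) by exact (b_le1 m k Hm Hk).
  assert (Hsd : forall u s, 0 <= s <= h -> a <= u - s -> u + s <= b ->
     Rabs (fe f (u - s) - 2 * fe f u + fe f (u + s)) < W).
  { intros u s Hs H1 H2. rewrite !fe_eq by lra.
    pose proof (om_sd f Hf u s h Hs ltac:(lra) ltac:(lra)). lra. }
  assert (Hc : forall c, a <= c <= b -> continuity_pt (fun t => fe f t - (al + be * t)) c).
  { intros c _. apply continuity_pt_minus. apply fe_cont; auto. reg. }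
  assert (Hc' : forall c, a <= c <= b -> continuity_pt (fun t => - (fe f t - (al + be * t))) c).
  { intros c Hc0. apply continuity_pt_opp. auto. }
  assert (Ea : fe f a - (al + be * a) = 0) by (rewrite fe_eq, La by lra; ring).
  assert (Eb : fe f b - (al + be * b) = 0) by (rewrite fe_eq, Lb by lra; ring).
  intros t Ht. unfold d2. rewrite <- (fe_eq f t) by lra. apply Rabs_le. split.
  - assert (- (fe f t - (al + be * t)) <= W + W / h ^ 2 * ((t - a) * (b - t))); [|lra].
    apply (maxp a b h W (fun t => - (fe f t - (al + be * t)))); auto.
    + cbv beta. rewrite Ea. ring.
    + cbv beta. rewrite Eb. ring.
    + intros u s Hs H1 H2. pose proof (Rlt_le _ _ (Hsd u s Hs H1 H2)) as D. apply Rabs_inv in D. lra.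
  - apply (maxp a b h W (fun t => fe f t - (al + be * t))); auto.
    intros u s Hs H1 H2. pose proof (Rlt_le _ _ (Hsd u s Hs H1 H2)) as D. apply Rabs_inv in D. lra.
Qed.

Lemma core r x h W : a <= x <= b -> 0 < h -> 2 * h <= b - a -> omega2 f h < W ->
  Rabs (comp_bernstein_iter n m r f x - lin_interp m f x)
  <= W + W / h ^ 2 * ((1 - 1 / INR n) ^ r * d2 a b x).
Proof.
  intros Hx Hh H2h HW. rewrite iter_piece, lin_piece by auto.
  apply T_err; auto. apply err_bound; auto.
Qed.

Lemma q_range : 0 <= 1 - 1 / INR n < 1.
Proof.
  assert (1 <= INR n) by (replace 1 with (INR 1) by reflexivity; apply le_INR; auto).
  split. apply (Rmult_le_reg_r (INR n)). lra. unfold Rdiv. field_simplify; lra.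
  assert (0 < 1 / INR n) by (apply Rdiv_lt_0_compat; lra). lra.
Qed.

Lemma pointwise r x : a <= x <= b ->
  Rabs (comp_bernstein_iter n m r f x - lin_interp m f x)
  <= 9 / 4 * omega2 f (sqrt ((x - a) * (b - x) * (1 - 1 / INR n) ^ r)).
Proof.
  intros Hx. pose proof q_range as Hq.
  assert (Hqr : 0 <= (1 - 1 / INR n) ^ r <= 1).
  { split. apply pow_le; lra. apply (Rle_trans _ (1 ^ r)); [apply pow_incr; lra | rewrite pow1; lra]. }
  set (D := (x - a) * (b - x) * (1 - 1 / INR n) ^ r).
  assert (HD0 : 0 <= D) by (unfold D; apply Rmult_le_pos; [nra|lra]).
  assert (HP0 : 0 <= (x - a) * (b - x)) by nra.
  assert (HP1 : (x - a) * (b - x) <= ((b - a) / 2) ^ 2).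
  { assert (0 <= (x - (a + b) / 2) ^ 2) by apply pow2_ge_0. nra. }
  assert (HD1 : D <= ((b - a) / 2) ^ 2).
  { unfold D. assert ((x - a) * (b - x) * (1 - 1 / INR n) ^ r <= (x - a) * (b - x)); [|lra].
    rewrite <- (Rmult_1_r ((x - a) * (b - x))) at 2. apply Rmult_le_compat_l; lra. }
  set (X := Rabs (comp_bernstein_iter n m r f x - lin_interp m f x)).
  assert (Hom : 0 <= omega2 f (sqrt D)) by (apply om_nonneg; auto; apply sqrt_pos).
  destruct (Rlt_or_le 0 D) as [Dp|Dz].
  - set (h := sqrt D).
    assert (Hh : 0 < h) by (apply sqrt_lt_R0; auto).
    assert (Hh2 : h ^ 2 = D) by (apply pow2_sqrt; lra).
    assert (H2h : 2 * h <= b - a).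
    { assert (h <= (b - a) / 2); [|lra]. unfold h. rewrite <- (sqrt_pow2 ((b - a) / 2)) by lra.
      apply sqrt_le_1_alt; auto. }
    assert (Hall : forall W, omega2 f h < W -> X <= 2 * W).
    { intros W HW. pose proof (core r x h W Hx Hh H2h HW) as C. fold X in C.
      unfold d2 in C. replace ((1 - 1 / INR n) ^ r * ((x - a) * (b - x))) with D in C by (unfold D; ring).
      rewrite <- Hh2 in C. replace (W / h ^ 2 * h ^ 2) with W in C by (field; lra). lra. }
    destruct (Rle_or_lt X (2 * omega2 f h)) as [C|C]. change (sqrt D) with h in Hom. lra.
    exfalso. specialize (Hall ((omega2 f h + X / 2) / 2) ltac:(lra)). change (sqrt D) with h in Hom. lra.
  - assert (D = 0) by lra.
    assert (X <= 0); [|lra].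
    apply Rnot_lt_le. intros HX.
    destruct (om_small f Hf (X / 4) ltac:(lra)) as [d0 [Hd0 Hs]].
    set (h := Rmin d0 ((b - a) / 2)).
    assert (Hh : 0 < h) by (unfold h; apply Rmin_glb_lt; lra).
    assert (Hhb : 2 * h <= b - a) by (unfold h; pose proof (Rmin_r d0 ((b - a) / 2)); lra).
    assert (Ho : omega2 f h < X / 2) by (pose proof (Hs h ltac:(split; [lra|unfold h; apply Rmin_l])); lra).
    pose proof (core r x h (X / 2) Hx Hh Hhb Ho) as C. fold X in C.
    unfold d2 in C. replace ((1 - 1 / INR n) ^ r * ((x - a) * (b - x))) with D in C by (unfold D; ring).
    rewrite H in C. lra.
Qed.

End K.

End Main.


Lemma glob n m f (Hn : (1 <= n)%nat) (Hm : (1 <= m)%nat) (Hf : cont01 f) r x : 0 <= x <= 1 ->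
  Rabs (comp_bernstein_iter n m r f x - lin_interp m f x)
  <= 9 / 4 * omega2 f (1 / (2 * INR m) * sqrt ((1 - 1 / INR n) ^ r)).
Proof.
  intros Hx. destruct (piece_range m x Hm Hx) as [Hk Hxk].
  set (k := piece_index m x) in *.
  eapply Rle_trans. apply (pointwise n m f Hn Hm Hf k Hk r x Hxk).
  assert (Hmp : 0 < INR m) by (apply lt_0_INR; lia).
  pose proof (q_range n Hn) as Hq.
  assert (HQ : 0 <= (1 - 1 / INR n) ^ r) by (apply pow_le; lra).
  set (a := INR (k - 1) / INR m) in *. set (b := INR k / INR m) in *.
  assert (Hba : b - a = 1 / INR m) by (unfold a, b; apply ba_len; auto).
  assert (HP0 : 0 <= (x - a) * (b - x)) by nra.
  assert (HP1 : (x - a) * (b - x) <= (1 / (2 * INR m)) ^ 2).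
  { replace (1 / (2 * INR m)) with ((b - a) / 2) by (rewrite Hba; field; lra).
    assert (0 <= (x - (a + b) / 2) ^ 2) by apply pow2_ge_0. nra. }
  apply Rmult_le_compat_l. lra.
  apply om_mono; auto. apply sqrt_pos.
  rewrite sqrt_mult by auto.
  apply Rmult_le_compat_r. apply sqrt_pos.
  rewrite <- (sqrt_pow2 (1 / (2 * INR m))). apply sqrt_le_1_alt; auto.
  apply Rlt_le, Rdiv_lt_0_compat; lra.
Qed.

Theorem mainTheorem2 (n m : nat) (f : R -> R) :
  (1 <= n)%nat -> (1 <= m)%nat -> cont01 f ->
  (forall r : nat, (1 <= r)%nat ->
     forall k : nat, (1 <= k <= m)%nat ->
     forall x : R, INR (k - 1) / INR m <= x <= INR k / INR m ->
       Rabs (comp_bernstein_iter n m r f x - lin_interp m f x)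
       <= 9 / 4 * omega2 f (sqrt ((x - INR (k - 1) / INR m) * (INR k / INR m - x)
                                  * (1 - 1 / INR n) ^ r)))
  /\
  (forall r : nat, (1 <= r)%nat ->
     supnorm01 (fun x => comp_bernstein_iter n m r f x - lin_interp m f x)
     <= 9 / 4 * omega2 f (1 / (2 * INR m) * sqrt ((1 - 1 / INR n) ^ r)))
  /\
  (forall eps : R, 0 < eps -> exists N : nat, forall r : nat, (N <= r)%nat ->
     forall x : R, 0 <= x <= 1 ->
       Rabs (comp_bernstein_iter n m r f x - lin_interp m f x) < eps).
Proof.
  intros Hn Hm Hf. split; [|split].
  - intros r _ k Hk x Hx. apply pointwise; auto.
  - intros r _. unfold supnorm01. apply lub_le.
    + exists (Rabs (comp_bernstein_iter n m r f 0 - lin_interp m f 0)). exists 0. split; [lra|reflexivity].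
    + intros v [x [Hx ->]]. apply glob; auto.
  - intros eps He.
    destruct (om_small f Hf (eps / 3) ltac:(lra)) as [d [Hd Hs]].
    assert (Hmp : 0 < INR m) by (apply lt_0_INR; lia).
    pose proof (q_range n Hn) as Hq.
    destruct (pow_lt_1_zero (1 - 1 / INR n) ltac:(rewrite Rabs_right; lra) ((2 * INR m * d) ^ 2))
      as [N0 HN0].
    { apply pow_lt. nra. }
    exists N0. intros r Hr x Hx.
    eapply Rle_lt_trans. apply glob; auto.
    assert (HQ : 0 <= (1 - 1 / INR n) ^ r) by (apply pow_le; lra).
    assert (Hsm : 1 / (2 * INR m) * sqrt ((1 - 1 / INR n) ^ r) <= d).
    { specialize (HN0 r Hr). rewrite Rabs_right in HN0 by lra.
      assert (sqrt ((1 - 1 / INR n) ^ r) <= 2 * INR m * d).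
      { rewrite <- (sqrt_pow2 (2 * INR m * d)) by nra. apply sqrt_le_1_alt; lra. }
      apply (Rmult_le_reg_l (2 * INR m)). lra.
      rewrite <- Rmult_assoc. replace (2 * INR m * (1 / (2 * INR m))) with 1 by (field; lra). lra. }
    assert (0 <= 1 / (2 * INR m) * sqrt ((1 - 1 / INR n) ^ r)).
    { apply Rmult_le_pos. apply Rlt_le, Rdiv_lt_0_compat; lra. apply sqrt_pos. }
    pose proof (Hs _ (conj H Hsm)). lra.
Qed.
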